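(* Let $G$ be a connected diamond-free graph. Then $G$ is CIS if and only if one of the following holds: (i) $G$ is clique simplicial; (ii) $G\cong K_{m,n}$ for some integers $m,n\ge 2$; (iii) $G\cong L(K_{n,n})$ for some integer $n\ge 3$.
   Context: All graphs are finite, simple and undirected. A clique is a set of pairwise adjacent vertices, a stable set a set of pairwise non-adjacent vertices; ''maximal'' means inclusion-maximal. A clique is strong if it intersects every maximal stable set. A graph is CIS if every maximal clique is strong (equivalently, every maximal clique intersects every maximal stable set). The diamond is $K_4$ minus one edge; a graph is diamond-free if it has no induced subgraph isomorphic to the diamond. A vertex $v$ is simplicial if its closed neighborhood $N[v]=N(v)\cup\{v\}$ is a clique; a clique is simplicial if it equals $N[v]$ for some simplicial vertex $v$ (such a clique is maximal). A graph is clique simplicial if every maximal clique is simplicial. $K_{m,n}$ is the complete bipartite graph with parts of sizes $m,n$; $L(H)$ denotes the line graph of $H$. *)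

(* Defs.v *)
From mathcomp Require Import all_boot.
Set Implicit Arguments. Unset Strict Implicit. Unset Printing Implicit Defensive.

Section Graphs.
Variables (T : finType) (e : rel T).

Definition simple_graph : Prop := symmetric e /\ irreflexive e.

Definition connected_graph : Prop :=
  0 < #|T| /\ forall x y : T, connect e x y.

Definition is_clique (A : {set T}) : bool :=
  [forall x in A, forall y in A, (x != y) ==> e x y].

Definition is_stable (A : {set T}) : bool :=
  [forall x in A, forall y in A, ~~ e x y].

Definition maximal_clique (A : {set T}) : bool := maxset is_clique A.
Definition maximal_stable (A : {set T}) : bool := maxset is_stable A.

Definition CIS : Prop :=
  forall C S : {set T}, maximal_clique C -> maximal_stable S -> C :&: S != set0.

Definition cnbhd (v : T) : {set T} := v |: [set u | e v u].

Definition simplicial_vertex (v : T) : bool := is_clique (cnbhd v).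

Definition simplicial_clique (C : {set T}) : bool :=
  [exists v, simplicial_vertex v && (C == cnbhd v)].

Definition clique_simplicial : Prop :=
  forall C : {set T}, maximal_clique C -> simplicial_clique C.

Definition diamond_free : Prop :=
  ~ exists a b c d : T,
      [/\ uniq [:: a; b; c; d],
          [&& e a b, e a c, e a d, e b c & e b d] & ~~ e c d].

Definition is_edge (E : {set T}) : bool :=
  [exists x, exists y, e x y && (E == [set x; y])].

End Graphs.

Definition isomorphic (T U : finType) (e : rel T) (f : rel U) : Prop :=
  exists g : T -> U, bijective g /\ forall x y, e x y = f (g x) (g y).

Definition Kmn_rel (m n : nat) : rel ('I_m + 'I_n)%type :=
  fun x y => match x, y with
             | inl _, inr _ | inr _, inl _ => true
             | _, _ => false
             end.

Definition line_vertex (T : finType) (e : rel T) := {E : {set T} | is_edge e E}.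

Definition line_rel (T : finType) (e : rel T) : rel (line_vertex e) :=
  fun E F => (E != F) && (val E :&: val F != set0).

Arguments Kmn_rel : clear implicits.

(* Main.v *)
Require Import Defs.
From mathcomp Require Import all_boot.
From mathcomp Require Import zify.
Set Implicit Arguments. Unset Strict Implicit. Unset Printing Implicit Defensive.

Lemma inj_surj_bij (A B : finType) (g : A -> B) :
  injective g -> (forall y, exists x, g x = y) -> bijective g.
Proof.
move=> ig sg; apply: inj_card_bij => //.
rewrite -(card_codom ig); apply: subset_leq_card; apply/subsetP => y _.
by case: (sg y) => x <-; apply: codom_f.
Qed.

Section LineKnn.
Variable n : nat.
Definition LV := line_vertex (Kmn_rel n n).

Lemma mkE_proof (i j : 'I_n) : is_edge (Kmn_rel n n) [set inl i; inr j].
Proof. by apply/existsP; exists (inl i); apply/existsP; exists (inr j); rewrite eqxx. Qed.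

Definition mkE (i j : 'I_n) : LV := exist _ [set inl i; inr j] (mkE_proof i j).

Lemma mkE_surj (E : LV) : exists i j, E = mkE i j.
Proof.
have := valP E; move=> /existsP [x /existsP [y /andP [kxy /eqP EA]]].
case: x kxy EA => [i | j]; case: y => [i' | j'] //= _ EA.
  by exists i, j'; apply: val_inj; rewrite /= EA.
by exists i', j; apply: val_inj; rewrite /= EA setUC.
Qed.

Lemma mkE_inj i j i' j' : mkE i j = mkE i' j' -> i = i' /\ j = j'.
Proof.
move=> /(congr1 val) /= E; split.
  move/setP: E => /(_ (inl i)); rewrite !inE eqxx /= => /esym /orP [/eqP [] // | /eqP //].
by move/setP: E => /(_ (inr j)); rewrite !inE eqxx orbT /= => /esym /eqP [].
Qed.

Lemma line_rel_mkE i j i' j' : @line_rel _ (Kmn_rel n n) (mkE i j) (mkE i' j') =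
  ((i != i') || (j != j')) && ((i == i') || (j == j')).
Proof.
rewrite /line_rel; congr andb.
  apply/idP/idP.
    apply: contraR; rewrite negb_or !negbK => /andP [/eqP-> /eqP->]; by rewrite eqxx.
  apply: contraL => /eqP /mkE_inj [-> ->]; by rewrite !eqxx.
apply/set0Pn/idP.
  case=> x; rewrite !inE => /andP [] /orP [] /eqP -> /orP [] /eqP //= [] ->;
    by rewrite eqxx ?orbT.
case/orP => /eqP ->.
  by exists (inl i'); rewrite !inE eqxx.
by exists (inr j'); rewrite !inE eqxx !orbT.
Qed.
End LineKnn.

Section Main.
Variables (T : finType) (e : rel T).
Hypothesis esym : symmetric e.
Hypothesis eirr : irreflexive e.
Hypothesis dfree : diamond_free e.
Hypothesis cis : CIS e.

Lemma cliqueP (A : {set T}) :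
  reflect (forall x y, x \in A -> y \in A -> x != y -> e x y) (is_clique e A).
Proof.
apply: (iffP forallP) => [H x y xA yA nxy | H x].
  by move: (H x); rewrite xA /= => /forallP /(_ y); rewrite yA /= nxy.
by apply/implyP => xA; apply/forallP => y; apply/implyP => yA; apply/implyP; apply: H.
Qed.

Lemma stableP (A : {set T}) :
  reflect (forall x y, x \in A -> y \in A -> ~~ e x y) (is_stable e A).
Proof.
apply: (iffP forallP) => [H x y xA yA | H x].
  by move: (H x); rewrite xA /= => /forallP /(_ y); rewrite yA.
by apply/implyP => xA; apply/forallP => y; apply/implyP => yA; apply: H.
Qed.

Lemma maxcliqueP C :
  reflect (is_clique e C /\ forall B, is_clique e B -> C \subset B -> B = C)
          (maximal_clique e C).
Proof. exact: maxsetP. Qed.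

Lemma maxstableP S :
  reflect (is_stable e S /\ forall B, is_stable e B -> S \subset B -> B = S)
          (maximal_stable e S).
Proof. exact: maxsetP. Qed.

Lemma mc_clique C : maximal_clique e C -> is_clique e C.
Proof. by case/maxcliqueP. Qed.

Lemma mc_adj C x y : maximal_clique e C -> x \in C -> y \in C -> x != y -> e x y.
Proof. by move/mc_clique/cliqueP; apply. Qed.

Lemma ms_stable S : maximal_stable e S -> is_stable e S.
Proof. by case/maxstableP. Qed.

Lemma ms_nadj S x y : maximal_stable e S -> x \in S -> y \in S -> ~~ e x y.
Proof. by move/ms_stable/stableP; apply. Qed.

Lemma neq_of_adj x y : e x y -> x != y.
Proof. by apply: contraTneq => ->; rewrite eirr. Qed.

Lemma mc_nonadj C u : maximal_clique e C -> u \notin C ->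
  exists2 z, z \in C & ~~ e u z.
Proof.
move=> /maxcliqueP [cC mC] uC.
case: (boolP [forall z in C, e u z]) => [/forallP H | ].
  have cB : is_clique e (u |: C).
    apply/cliqueP => x y; rewrite !inE => /orP [/eqP-> | xC] /orP [/eqP-> | yC].
    - by rewrite eqxx.
    - by move=> _; move: (H y); rewrite yC.
    - by move=> _; move: (H x); rewrite xC /= esym.
    - by move/cliqueP: cC; apply.
  have := mC _ cB (subsetUr _ _) => E.
  by move: uC; rewrite -E !inE eqxx.
rewrite negb_forall => /existsP [z]; rewrite negb_imply => /andP [zC nuz].
by exists z.
Qed.

Lemma mc_exists (A : {set T}) : is_clique e A -> exists2 C, maximal_clique e C & A \subset C.
Proof. by move=> cA; case: (maxset_exists cA) => C mC sAC; exists C. Qed.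

Lemma ms_exists (A : {set T}) : is_stable e A -> exists2 S, maximal_stable e S & A \subset S.
Proof. by move=> cA; case: (maxset_exists cA) => C mC sAC; exists C. Qed.

Lemma clique2 x y : e x y -> is_clique e [set x; y].
Proof.
move=> exy; apply/cliqueP => a b; rewrite !inE => /orP [] /eqP-> /orP [] /eqP->;
  rewrite ?eqxx //= => _; by rewrite // esym.
Qed.

Lemma clique1 x : is_clique e [set x].
Proof. by apply/cliqueP => a b; rewrite !inE => /eqP-> /eqP->; rewrite eqxx. Qed.

Lemma stable1 x : is_stable e [set x].
Proof. by apply/stableP => a b; rewrite !inE => /eqP-> /eqP->; rewrite eirr. Qed.

Lemma stable2 x y : ~~ e x y -> is_stable e [set x; y].
Proof.
move=> nxy; apply/stableP => a b; rewrite !inE => /orP [] /eqP-> /orP [] /eqP->;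
  by rewrite ?eirr // esym.
Qed.

Lemma line_exists x y : e x y -> exists2 C, maximal_clique e C & (x \in C) && (y \in C).
Proof.
move=> exy; case: (mc_exists (clique2 exy)) => C mC sub; exists C => //.
by rewrite !(subsetP sub) // !inE eqxx ?orbT.
Qed.

Lemma F1 C u x y : maximal_clique e C -> u \notin C -> x \in C -> y \in C ->
  e u x -> e u y -> x = y.
Proof.
move=> mC uC xC yC eux euy; apply/eqP; apply/negPn/negP => nxy.
case: (mc_nonadj mC uC) => z zC nuz.
apply: dfree; exists x, y, u, z; split.
- rewrite /= !inE !negb_or nxy /=.
  have -> : x != u by apply: contraNneq uC => <-.
  have -> : x != z by apply: contraNneq nuz => <-.
  have -> : y != u by apply: contraNneq uC => <-.
  have -> : y != z by apply: contraNneq nuz => <-.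
  by have -> : u != z by apply: contraNneq uC => ->.
- rewrite (mc_adj mC xC yC nxy) esym eux (mc_adj mC xC zC) /=; last first.
    by apply: contraNneq nuz => <-.
  rewrite esym euy (mc_adj mC yC zC) //.
  by apply: contraNneq nuz => <-.
- exact: nuz.
Qed.

Lemma mc_eq C D x y : maximal_clique e C -> maximal_clique e D ->
  x \in C -> x \in D -> y \in C -> y \in D -> x != y -> C = D.
Proof.
move=> mC mD xC xD yC yD nxy.
have sDC : D \subset C.
  apply/subsetP => d dD; apply/negPn/negP => dC.
  have dx : d != x by apply: contraNneq dC => ->.
  have dy : d != y by apply: contraNneq dC => ->.
  move: (F1 mC dC xC yC (mc_adj mD dD xD dx) (mc_adj mD dD yD dy)) => /eqP.
  by rewrite (negbTE nxy).
by case/maxcliqueP: mD => _ /(_ C (mc_clique mC) sDC).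
Qed.

Lemma mc_meet C D x y : maximal_clique e C -> maximal_clique e D -> C != D ->
  x \in C -> x \in D -> y \in C -> y \in D -> x = y.
Proof.
move=> mC mD nCD xC xD yC yD; apply/eqP/negPn/negP => nxy.
by move: nCD; rewrite (mc_eq mC mD xC xD yC yD nxy) eqxx.
Qed.


Lemma meet C S : maximal_clique e C -> maximal_stable e S -> exists2 x, x \in C & x \in S.
Proof.
move=> mC mS; move: (cis mC mS); case/set0Pn => x; rewrite inE => /andP [xC xS].
by exists x.
Qed.

Lemma no_dom (X C : {set T}) : is_stable e X -> maximal_clique e C ->
  (forall x, x \in X -> x \notin C) ->
  (forall c, c \in C -> exists2 x, x \in X & e c x) -> False.
Proof.
move=> sX mC disj dom.
case: (ms_exists sX) => S mS sXS.
case: (meet mC mS) => c cC cS.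
case: (dom c cC) => x xX ecx.
by move: (ms_nadj mS cS (subsetP sXS x xX)); rewrite ecx.
Qed.

Lemma ms_unique C S x y : maximal_clique e C -> maximal_stable e S ->
  x \in C -> x \in S -> y \in C -> y \in S -> x = y.
Proof.
move=> mC mS xC xS yC yS; apply/eqP/negPn/negP => nxy.
by move: (ms_nadj mS xS yS); rewrite (mc_adj mC xC yC nxy).
Qed.

Lemma W S y v : maximal_stable e S -> y \notin S -> v \in S -> e y v ->
  (forall s, s \in S -> e y s -> s = v) -> simplicial_vertex e y.
Proof.
move=> mS yS vS eyv Hs.
case: (line_exists eyv) => L mL /andP [yL vL].
have sub : cnbhd e y \subset L.
  apply/subsetP => z; rewrite !inE => /orP [/eqP-> // | eyz].
  case: (line_exists eyz) => M mM /andP [yM zM].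
  case: (meet mM mS) => s sM sS.
  have sy : s != y by apply: contraNneq yS => <-.
  have eys : e y s by rewrite (mc_adj mM yM sM) // eq_sym.
  have sv := Hs s sS eys; subst s.
  have yv : y != v by apply: contraNneq yS => ->.
  by rewrite (mc_eq mL mM yL yM vL sM yv).
apply/cliqueP => a b aN bN nab.
exact: (mc_adj mL (subsetP sub a aN) (subsetP sub b bN) nab).
Qed.

Lemma ms_dom S y : maximal_stable e S -> y \notin S -> exists2 s, s \in S & e y s.
Proof.
move=> /maxstableP [sS mS] yS.
case: (boolP [exists s in S, e y s]) => [/existsP [s /andP [sS' eys]] | ]; first by exists s.
rewrite negb_exists => /forallP H.
have sB : is_stable e (y |: S).
  apply/stableP => a b; rewrite !inE => /orP [/eqP-> | aS] /orP [/eqP-> | bS].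
  - by rewrite eirr.
  - by move: (H b); rewrite bS.
  - by move: (H a); rewrite aS /= esym.
  - by move/stableP: sS; apply.
by move: yS; rewrite -(mS _ sB (subsetUr _ _)) !inE eqxx.
Qed.

Lemma two_nbrs S y v : maximal_stable e S -> y \notin S -> v \in S ->
  ~~ simplicial_vertex e y -> exists2 s, s \in S & e y s && (s != v).
Proof.
move=> mS yS vS ns.
case: (ms_dom mS yS) => s sS eys.
case: (boolP (s == v)) => [/eqP esv | nsv]; last by exists s; rewrite ?eys.
subst s.
case: (boolP [exists s in S, e y s && (s != v)]) => [/existsP [s /andP [sS' H]] | ].
  by exists s.
rewrite negb_exists => /forallP H.
move: ns; rewrite (W mS yS vS eys) //.
move=> s sS' eys'; apply/eqP; move: (H s); rewrite sS' eys' /=.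
by move/negPn.
Qed.

Lemma simplicial_mc C v : maximal_clique e C -> v \in C -> simplicial_vertex e v ->
  C = cnbhd e v.
Proof.
move=> mC vC sv.
have sub : C \subset cnbhd e v.
  apply/subsetP => c cC; rewrite /cnbhd !inE.
  case: (boolP (c == v)) => [/eqP-> | ncv]; first done.
  by rewrite (mc_adj mC vC cC) ?orbT // eq_sym.
by case/maxcliqueP: mC => _ /(_ _ sv sub) ->.
Qed.

Definition goodb (C : {set T}) := [forall v in C, ~~ simplicial_vertex e v].

Lemma prop_ns C v x : maximal_clique e C -> goodb C -> v \in C -> x \notin C -> e v x ->
  ~~ simplicial_vertex e x.
Proof.
move=> mC gC vC xC evx; apply/negP => sx.
case: (ms_exists (stable1 v)) => S mS sub.
have vS : v \in S by rewrite (subsetP sub) // inE.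
pose X := x |: (S :\ v).
have xS : forall s, s \in S -> s != v -> ~~ e x s.
  move=> s sS nsv; apply/negP => exs.
  have : e s v.
    move/cliqueP: sx; apply; rewrite ?inE ?eqxx ?exs ?orbT //.
      by rewrite esym evx orbT.
  by rewrite (negbTE (ms_nadj mS sS vS)).
apply: (no_dom (X := X) (C := C)).
- apply/stableP => a b; rewrite !inE => /orP [/eqP-> | /andP [nav aS]] /orP [/eqP-> | /andP [nbv bS]].
  + by rewrite eirr.
  + exact: xS.
  + by rewrite esym; apply: xS.
  + exact: ms_nadj mS aS bS.
- exact: mC.
- move=> y; rewrite !inE => /orP [/eqP-> // | /andP [nyv yS]].
  apply: contra nyv => yC; apply/eqP; exact: (ms_unique mC mS yC yS vC vS).
- move=> c cC; case: (boolP (c == v)) => [/eqP-> | ncv].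
    by exists x; rewrite ?inE ?eqxx.
  have cS : c \notin S.
    apply: contra ncv => cS; apply/eqP; exact: (ms_unique mC mS cC cS vC vS).
  have nsc : ~~ simplicial_vertex e c by move/forallP: gC => /(_ c); rewrite cC.
  case: (two_nbrs mS cS vS nsc) => s sS /andP [ecs nsv].
  by exists s; rewrite // !inE sS nsv orbT.
Qed.

Lemma good_meet C D u : maximal_clique e C -> maximal_clique e D -> goodb C ->
  u \in C -> u \in D -> goodb D.
Proof.
move=> mC mD gC uC uD; apply/forallP => y; apply/implyP => yD.
case: (boolP (y \in C)) => [yC | yC]; first by move/forallP: gC => /(_ y); rewrite yC.
have uy : u != y by apply: contraNneq yC => <-.
exact: (prop_ns mC gC uC yC (mc_adj mD uD yD uy)).
Qed.

Section NS.
Hypothesis conn : connected_graph e.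
Hypothesis ncs : ~ clique_simplicial e.

Lemma no_simplicial v : ~~ simplicial_vertex e v.
Proof.
have [C0 [mC0 gC0]] : exists C, maximal_clique e C /\ goodb C.
  case: (boolP [exists C, maximal_clique e C && ~~ simplicial_clique e C]).
    case/existsP => C /andP [mC nsC]; exists C; split => //.
    apply/forallP => v'; apply/implyP => v'C; apply/negP => sv'.
    move/negP: nsC; apply; apply/existsP; exists v'.
    by rewrite sv' /= (simplicial_mc mC v'C sv') eqxx.
  rewrite negb_exists => /forallP H; exfalso; apply: ncs => C mC.
  by move: (H C); rewrite mC /= negbK.
pose P := [pred z | [exists C, [&& maximal_clique e C, z \in C & goodb C]]].
have clP : closed e P.
  have step : forall x y, e x y -> x \in P -> y \in P.
    move=> x y exy; rewrite !inE => /existsP [C /and3P [mC xC gC]].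
    case: (line_exists exy) => D mD /andP [xD yD].
    by apply/existsP; exists D; rewrite mD yD (good_meet mC mD gC xC xD).
  move=> x y exy; apply/idP/idP; first exact: step.
  by apply: step; rewrite esym.
have [x0 x0C0] : exists x, x \in C0.
  case: conn => ne _.
  case/card_gt0P: ne => z _.
  apply/set0Pn; apply/negP => /eqP C00.
  move/maxcliqueP: mC0 => [_ /(_ [set z] (clique1 z))].
  by rewrite C00 sub0set => /(_ isT) /setP /(_ z); rewrite !inE eqxx.
have Px0 : x0 \in P by rewrite inE; apply/existsP; exists C0; rewrite mC0 x0C0 gC0.
have : v \in P.
  case: conn => _ /(_ x0 v) cx.
  by rewrite -(closed_connect clP cx).
rewrite inE; case/existsP => C /and3P [mC vC gC].
by move/forallP: gC => /(_ v); rewrite vC.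
Qed.


Lemma T4 S v M M' y : maximal_stable e S -> v \in S ->
  maximal_clique e M -> maximal_clique e M' -> M != M' -> v \in M -> v \in M' ->
  y \in M' -> y != v ->
  exists2 z, (z \in M) && (z != v) &
    (forall s, s \in S -> s != v -> e z s -> e y s).
Proof.
move=> mS vS mM mM' nMM' vM vM' yM' yv.
case: (boolP [exists z, [&& z \in M, z != v &
          [forall s, (s \in S) ==> (s != v) ==> e z s ==> e y s]]]).
  case/existsP => z /and3P [zM zv /forallP H]; exists z; first by rewrite zM.
  by move=> s sS sv ezs; move: (H s); rewrite sS sv ezs.
rewrite negb_exists => /forallP H; exfalso.
have yM : y \notin M.
  by apply: contra yv => yM; apply/eqP; exact: (mc_meet mM mM' nMM' yM yM' vM vM').
pose X := y |: [set c in S | (c != v) && ~~ e y c].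
apply: (no_dom (X := X) (C := M)) => //.
- apply/stableP => a b; rewrite !inE => /orP [/eqP-> | /andP [aS /andP [av nya]]]
     /orP [/eqP-> | /andP [bS /andP [bv nyb]]].
  + by rewrite eirr.
  + exact: nyb.
  + by rewrite esym.
  + exact: ms_nadj mS aS bS.
- move=> x; rewrite !inE => /orP [/eqP-> // | /andP [xS /andP [xv _]]].
  apply: contra xv => xM; apply/eqP; exact: (ms_unique mM mS xM xS vM vS).
- move=> c cM; case: (boolP (c == v)) => [/eqP-> | cv].
    exists y; first by rewrite !inE eqxx.
    by rewrite (mc_adj mM' vM' yM') // eq_sym.
  move: (H c); rewrite cM cv /= negb_forall => /existsP [s].
  rewrite !negb_imply => /and4P [sS sv ecs nys].
  by exists s; rewrite // !inE sS sv nys orbT.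
Qed.

Lemma dist2 L u w l : maximal_clique e L -> u \notin L ->
  (forall x, x \in L -> ~~ e u x) -> e u w -> l \in L -> e w l -> False.
Proof.
move=> mL uL Hu euw lL ewl.
have nul : ~~ e u l := Hu l lL.
case: (ms_exists (stable2 nul)) => S mS sub.
have uS : u \in S by rewrite (subsetP sub) // !inE eqxx.
have lS : l \in S by rewrite (subsetP sub) // !inE eqxx orbT.
have wL : w \notin L by apply/negP => wL; move: (Hu w wL); rewrite euw.
case: (line_exists ewl) => M mM /andP [wM lM].
have nLM : L != M by apply: contraNneq wL => ->.
have wl : w != l by apply: contraNneq wL => ->.
case: (T4 mS lS mL mM nLM lL lM wM wl) => z /andP [zL zl] Hz.
have nML : M != L by rewrite eq_sym.
case: (T4 mS lS mM mL nML lM lL zL zl) => w' /andP [w'M w'l] Hw'.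
have w'S : w' \notin S.
  apply/negP => w'S; move: (ms_nadj mS w'S lS).
  by rewrite (mc_adj mM w'M lM w'l).
case: (two_nbrs mS w'S lS (no_simplicial w')) => s sS /andP [ew's sl].
have ezs := Hw' s sS sl ew's.
have ews := Hz s sS sl ezs.
have sM : s \notin M.
  by apply: contra sl => sM; apply/eqP; exact: (ms_unique mM mS sM sS lM lS).
have ww' : w' = w by apply: (F1 mM sM w'M wM); rewrite esym.
subst w'.
have uzl : u != l by apply: contraNneq uL => ->.
have ewu : e w u by rewrite esym.
have ezu := Hw' u uS uzl ewu.
by move: (Hu z zL); rewrite esym ezu.
Qed.

Lemma GQ1 L u : maximal_clique e L -> u \notin L -> exists2 l, l \in L & e u l.
Proof.
move=> mL uL.
pose B := [pred x | (x \in L) || [exists l in L, e x l]].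
have step : forall x y, e x y -> x \in B -> y \in B.
  move=> x y exy; rewrite !inE => /orP [xL | /existsP [l /andP [lL exl]]].
    by apply/orP; right; apply/existsP; exists x; rewrite xL esym.
  case: (boolP (y \in L)) => //= yL.
  case: (boolP [exists l in L, e y l]) => // /negP H; exfalso.
  apply: (dist2 mL yL _ (w := x) (l := l)) => //; last by rewrite esym.
  move=> z zL; apply/negP => eyz; apply: H; apply/existsP; exists z.
  by rewrite zL eyz.
have clB : closed e B.
  move=> x y exy; apply/idP/idP; first exact: step.
  by apply: step; rewrite esym.
have [x0 x0L] : exists x, x \in L.
  case: conn => ne _; case/card_gt0P: ne => z _.
  apply/set0Pn; apply/negP => /eqP L0.
  move/maxcliqueP: mL => [_ /(_ [set z] (clique1 z))].
  by rewrite L0 sub0set => /(_ isT) /setP /(_ z); rewrite !inE eqxx.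
have : u \in B.
  case: conn => _ /(_ x0 u) cx.
  by rewrite -(closed_connect clB cx) inE x0L.
rewrite inE (negbTE uL) /= => /existsP [l /andP [lL eul]].
by exists l.
Qed.


Lemma nbr_out x L : maximal_clique e L -> x \in L -> ~~ simplicial_vertex e x ->
  exists2 s, e x s & s \notin L.
Proof.
move=> mL xL nsx.
case: (boolP [exists s, e x s && (s \notin L)]) => [/existsP [s /andP [H1 H2]] | ].
  by exists s.
rewrite negb_exists => /forallP H; exfalso; move/negP: nsx; apply.
apply/cliqueP => a b; rewrite /cnbhd !inE.
have inL : forall y, (y == x) || e x y -> y \in L.
  move=> y /orP [/eqP-> // | exy]; move: (H y); rewrite exy /=.
  by move/negPn.
move=> /inL aL /inL bL nab; exact: mc_adj mL aL bL nab.
Qed.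

Lemma two_in (C : {set T}) v : 2 < #|C| -> exists w1 w2,
  [/\ w1 \in C, w2 \in C, w1 != v, w2 != v & w1 != w2].
Proof.
move=> c3.
have : 1 < #|C :\ v|.
  move: c3; rewrite (cardsD1 v C); case: (v \in C) => /=; lia.
case/card_gt1P => w1 [w2 [h1 h2 h12]]; exists w1, w2.
by move: h1 h2; rewrite !inE => /andP [-> ->] /andP [-> ->].
Qed.

Lemma line3 C L v : maximal_clique e C -> 2 < #|C| -> v \in C ->
  maximal_clique e L -> v \in L -> L != C -> 2 < #|L|.
Proof.
move=> mC c3 vC mL vL nLC.
case: (boolP (2 < #|L|)) => // small; exfalso.
have [x xL xv] : exists2 x, x \in L & x != v.
  case: (boolP [exists x in L, x != v]) => [/existsP [x /andP [? ?]] | ]; first by exists x.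
  rewrite negb_exists => /forallP H.
  have sub : L \subset C.
    apply/subsetP => y yL; move: (H y); rewrite yL /= negbK => /eqP ->; done.
  move/maxcliqueP: mL => [_ /(_ C (mc_clique mC) sub)] E.
  by move: nLC; rewrite E eqxx.
have Lvx : forall y, y \in L -> (y == v) || (y == x).
  move=> y yL; apply/negP => /negP; rewrite negb_or => /andP [yv yx].
  move/negP: small; apply; apply/card_gt2P; exists v, x, y.
  by split; split; rewrite // ?(eq_sym v) // eq_sym.
case: (nbr_out mL xL (no_simplicial x)) => s exs sL.
have nsv : ~~ e s v.
  apply/negP => esv; move/eqP: xv; apply.
  by apply: (F1 mL sL xL vL); rewrite // esym.
have sC : s \notin C.
  apply/negP => sC; move: nsv; rewrite (mc_adj mC sC vC) //.
  by apply: contraNneq sL => ->.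
case: (two_in v c3) => w1 [w2 [w1C w2C w1v w2v w12]].
have [w wC /andP [wv nsw]] : exists2 w, w \in C & (w != v) && ~~ e s w.
  case: (boolP (e s w1)) => h1; last by exists w1; rewrite ?w1v.
  case: (boolP (e s w2)) => h2; last by exists w2; rewrite ?w2v.
  by move: w12; rewrite (F1 mC sC w1C w2C h1 h2) eqxx.
have wL : w \notin L.
  apply: contra wv => wL; apply/eqP.
  have nCL : C != L by rewrite eq_sym.
  exact: (mc_meet mC mL nCL wC wL vC vL).
have xC : x \notin C.
  apply: contra xv => xC; apply/eqP.
  have nCL : C != L by rewrite eq_sym.
  exact: (mc_meet mC mL nCL xC xL vC vL).
have nwx : ~~ e w x.
  apply/negP => ewx; move/eqP: wv; apply.
  apply: (F1 mC xC wC vC); first by rewrite esym.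
  exact: (mc_adj mL xL vL xv).
apply: (no_dom (X := [set w; s]) (C := L)) => //.
- by apply: stable2; rewrite esym.
- by move=> y; rewrite !inE => /orP [] /eqP ->.
- move=> y yL; case/orP: (Lvx y yL) => /eqP ->.
    exists w; first by rewrite !inE eqxx.
    by rewrite (mc_adj mC vC wC) // eq_sym.
  by exists s; rewrite ?inE ?eqxx ?orbT.
Qed.

Definition three v := exists L1 L2 L3, [/\ maximal_clique e L1, maximal_clique e L2,
  maximal_clique e L3, [&& v \in L1, v \in L2 & v \in L3] & [&& L1 != L2, L2 != L3 & L1 != L3]].

Lemma two_noC v C : three v -> exists M M', [/\ maximal_clique e M, maximal_clique e M',
  [&& v \in M & v \in M'], M != M' & (M != C) && (M' != C)].
Proof.
case=> L1 [L2 [L3 [m1 m2 m3 /and3P [v1 v2 v3] /and3P [n12 n23 n13]]]].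
case: (eqVneq L1 C) => [E1 | h1].
  by exists L2, L3; rewrite m2 m3 v2 v3 n23 -E1 eq_sym n12 eq_sym n13.
case: (eqVneq L2 C) => [E2 | h2].
  by exists L1, L3; rewrite m1 m3 v1 v3 n13 h1 -E2 eq_sym n23.
by exists L1, L2; rewrite m1 m2 v1 v2 n12 h1 h2.
Qed.

Lemma lines_distinct u w L L' c c' K K' : maximal_clique e L -> maximal_clique e L' ->
  L != L' -> u \in L -> u \in L' -> c \in L -> c' \in L' -> e w c -> e w c' -> ~~ e w u ->
  maximal_clique e K -> maximal_clique e K' -> w \in K -> c \in K -> w \in K' -> c' \in K' ->
  K != K'.
Proof.
move=> mL mL' nLL' uL uL' cL c'L' ewc ewc' nwu mK mK' wK cK wK' c'K'.
apply/negP => /eqP E; subst K'.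
have cu : c != u by apply: contraNneq nwu => <-.
have c'u : c' != u by apply: contraNneq nwu => <-.
have cc' : c != c'.
  apply/negP => /eqP E; subst c'.
  by move: cu; rewrite (mc_meet mL mL' nLL' cL c'L' uL uL') eqxx.
have c'L : c' \notin L.
  apply: contra c'u => c'L; apply/eqP; exact: (mc_meet mL mL' nLL' c'L c'L' uL uL').
have := F1 mL c'L cL uL (mc_adj mK c'K' cK _) (mc_adj mL' c'L' uL' c'u).
by rewrite eq_sym cc' => /(_ isT) /eqP; rewrite (negbTE cu).
Qed.

Lemma transfer u w : u != w -> ~~ e u w -> three u -> three w.
Proof.
move=> uw nuw [L1 [L2 [L3 [m1 m2 m3 /and3P [u1 u2 u3] /and3P [n12 n23 n13]]]]].
have nwu : ~~ e w u by rewrite esym.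
have wL : forall L, maximal_clique e L -> u \in L -> w \notin L.
  move=> L mL uL; apply/negP => wL; move: nuw.
  by rewrite (mc_adj mL uL wL uw).
case: (GQ1 m1 (wL _ m1 u1)) => c1 c1L ew1.
case: (GQ1 m2 (wL _ m2 u2)) => c2 c2L ew2.
case: (GQ1 m3 (wL _ m3 u3)) => c3 c3L ew3.
case: (line_exists ew1) => K1 mK1 /andP [wK1 cK1].
case: (line_exists ew2) => K2 mK2 /andP [wK2 cK2].
case: (line_exists ew3) => K3 mK3 /andP [wK3 cK3].
exists K1, K2, K3; split => //; first by rewrite wK1 wK2 wK3.
rewrite (lines_distinct m1 m2 n12 u1 u2 c1L c2L ew1 ew2 nwu mK1 mK2 wK1 cK1 wK2 cK2).
rewrite (lines_distinct m2 m3 n23 u2 u3 c2L c3L ew2 ew3 nwu mK2 mK3 wK2 cK2 wK3 cK3).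
by rewrite (lines_distinct m1 m3 n13 u1 u3 c1L c3L ew1 ew3 nwu mK1 mK3 wK1 cK1 wK3 cK3).
Qed.

Lemma third_elem (A : {set T}) x y : 2 < #|A| -> exists2 z, z \in A & (z != x) && (z != y).
Proof.
move=> c3.
have : 0 < #|A :\ x :\ y|.
  move: c3; rewrite (cardsD1 x A) (cardsD1 y (A :\ x)).
  case: (x \in A); case: (y \in A :\ x) => /=; lia.
case/card_gt0P => z; rewrite !inE => /and3P [zy zx zA].
by exists z; rewrite ?zx ?zy.
Qed.

Lemma three_C C v u : maximal_clique e C -> 2 < #|C| -> v \in C -> u \in C -> u != v ->
  three v -> three u.
Proof.
move=> mC c3 vC uC uv thv.
case: (third_elem v u c3) => l lC /andP [lv lu].
case: (nbr_out mC lC (no_simplicial l)) => t elt tC.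
have ntv : ~~ e t v.
  apply/negP => etv; move: lv; rewrite (F1 mC tC lC vC _ etv) ?eqxx //.
  by rewrite esym.
have ntu : ~~ e t u.
  apply/negP => etu; move: lu; rewrite (F1 mC tC lC uC _ etu) ?eqxx //.
  by rewrite esym.
have tnv : t != v by apply: contraNneq tC => ->.
have tnu : t != u by apply: contraNneq tC => ->.
apply: (transfer (u := t)) => //.
apply: (transfer (u := v)) => //; first by rewrite eq_sym.
by rewrite esym.
Qed.

Lemma FIB S v C N w : maximal_stable e S -> v \in S ->
  maximal_clique e C -> maximal_clique e N -> C != N -> v \in C -> v \in N ->
  w \in N -> w != v ->
  exists2 u, (u \in C) && (u != v) & (forall s, s \in S -> s != v -> e w s = e u s).
Proof.
move=> mS vS mC mN nCN vC vN wN wv.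
case: (T4 mS vS mC mN nCN vC vN wN wv) => u /andP [uC uv] Hu.
have nNC : N != C by rewrite eq_sym.
case: (T4 mS vS mN mC nNC vN vC uC uv) => w' /andP [w'N w'v] Hw'.
have w'S : w' \notin S.
  apply/negP => w'S; move: (ms_nadj mS w'S vS).
  by rewrite (mc_adj mN w'N vN w'v).
case: (two_nbrs mS w'S vS (no_simplicial w')) => s0 s0S /andP [ew's0 s0v].
have eus0 := Hw' s0 s0S s0v ew's0.
have ews0 := Hu s0 s0S s0v eus0.
have s0N : s0 \notin N.
  by apply: contra s0v => s0N; apply/eqP; exact: (ms_unique mN mS s0N s0S vN vS).
have ww' : w' = w by apply: (F1 mN s0N w'N wN); rewrite esym.
subst w'.
exists u; first by rewrite uC uv.
move=> s sS sv; apply/idP/idP; first exact: Hw'.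
exact: Hu.
Qed.

Lemma fiber_disj S v C u u' s : maximal_stable e S -> v \in S -> maximal_clique e C ->
  v \in C -> u \in C -> u' \in C -> s \in S -> s != v -> e u s -> e u' s -> u = u'.
Proof.
move=> mS vS mC vC uC u'C sS sv eus eu's.
have sC : s \notin C.
  by apply: contra sv => sC; apply/eqP; exact: (ms_unique mC mS sC sS vC vS).
by apply: (F1 mC sC uC u'C); rewrite esym.
Qed.

Lemma zpoint S v C N u : maximal_stable e S -> v \in S ->
  maximal_clique e C -> maximal_clique e N -> C != N -> v \in C -> v \in N ->
  u \in C -> u != v ->
  exists2 z, (z \in N) && (z != v) & (forall s, s \in S -> s != v -> e z s = e u s).
Proof.
move=> mS vS mC mN nCN vC vN uC uv.
have nNC : N != C by rewrite eq_sym.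
case: (T4 mS vS mN mC nNC vN vC uC uv) => z /andP [zN zv] Hz.
case: (FIB mS vS mC mN nCN vC vN zN zv) => u' /andP [u'C u'v] Hu'.
exists z; first by rewrite zN zv.
have zS : z \notin S.
  apply/negP => zS; move: (ms_nadj mS zS vS).
  by rewrite (mc_adj mN zN vN zv).
case: (two_nbrs mS zS vS (no_simplicial z)) => s0 s0S /andP [ezs0 s0v].
have eus0 := Hz s0 s0S s0v ezs0.
have eu's0 : e u' s0 by rewrite -Hu'.
have uu' := fiber_disj mS vS mC vC uC u'C s0S s0v eus0 eu's0.
subst u'.
exact: Hu'.
Qed.

Lemma notin_other C N v w : maximal_clique e C -> maximal_clique e N -> N != C ->
  v \in C -> v \in N -> w \in N -> w != v -> w \notin C.
Proof.
move=> mC mN nNC vC vN wN wv; apply: contra wv => wC; apply/eqP.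
exact: (mc_meet mN mC nNC wN wC vN vC).
Qed.

Lemma EX C v1 : maximal_clique e C -> 2 < #|C| -> v1 \in C -> three v1 -> False.
Proof.
move=> mC c3 v1C th1.
case: (two_noC C th1) => M [M' [mM mM' /andP [v1M v1M'] nMM' /andP [nMC nM'C]]].
case: (ms_exists (stable1 v1)) => S mS subS.
have v1S : v1 \in S by rewrite (subsetP subS) // inE.
case: (two_in v1 c3) => u2 [_ [u2C _ u2v _ _]].
have nCM : C != M by rewrite eq_sym.
have nCM' : C != M' by rewrite eq_sym.
case: (zpoint mS v1S mC mM nCM v1C v1M u2C u2v) => z /andP [zM zv] Hz.
case: (zpoint mS v1S mC mM' nCM' v1C v1M' u2C u2v) => z' /andP [z'M' z'v] Hz'.
case: (nbr_out mC u2C (no_simplicial u2)) => x eu2x xC.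
case: (line_exists eu2x) => L2 mL2 /andP [u2L2 xL2].
have nL2C : L2 != C by apply: contraNneq xC => <-.
have c3L2 := line3 mC c3 u2C mL2 u2L2 nL2C.
case: (two_in u2 c3L2) => y1 [y2 [y1L y2L y1u y2u y12]].
have u2S : u2 \notin S.
  apply/negP => u2S; move: (ms_nadj mS u2S v1S).
  by rewrite (mc_adj mC u2C v1C u2v).
have [y yL2 /andP [yu2 yS]] : exists2 y, y \in L2 & (y != u2) && (y \notin S).
  case: (boolP (y1 \in S)) => y1S; last by exists y1; rewrite ?y1u.
  case: (boolP (y2 \in S)) => y2S; last by exists y2; rewrite ?y2u.
  by move: (ms_nadj mS y1S y2S); rewrite (mc_adj mL2 y1L y2L y12).
have yC : y \notin C := notin_other mC mL2 nL2C u2C u2L2 yL2 yu2.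
have eu2y : e u2 y by rewrite (mc_adj mL2 u2L2 yL2) // eq_sym.
have nyv1 : ~~ e y v1.
  apply/negP => eyv1; move: u2v; rewrite (F1 mC yC u2C v1C _ eyv1) ?eqxx //.
  by rewrite esym.
have nzz' : ~~ e z z'.
  apply/negP => ezz'.
  have nM'M : M' != M by rewrite eq_sym.
  have z'M : z' \notin M := notin_other mM mM' nM'M v1M v1M' z'M' z'v.
  move: zv; rewrite (F1 mM z'M zM v1M _ (mc_adj mM' z'M' v1M' z'v)) ?eqxx //.
  by rewrite esym.
case: (meet mL2 mS) => a aL2 aS.
have au2 : a != u2 by apply: contraNneq u2S => <-.
have eu2a : e u2 a by rewrite (mc_adj mL2 u2L2 aL2) // eq_sym.
have nCL2 : C != L2 by rewrite eq_sym.
have v1L2 : v1 \notin L2.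
  apply/negP => v1L2; move: u2v.
  by rewrite (mc_meet mC mL2 nCL2 v1C v1L2 u2C u2L2) eqxx.
have av1 : a != v1 by apply: contraNneq v1L2 => <-.
have eza : e z a by rewrite Hz.
have ez'a : e z' a by rewrite Hz'.
have ya : y != a by apply: contraNneq yS => ->.
have eya : e y a by rewrite (mc_adj mL2 yL2 aL2).
have [zz [zzC ev1zz nyzz Hzz]] : exists zz, [/\ zz \notin C, e v1 zz, ~~ e y zz &
   forall s, s \in S -> s != v1 -> e zz s = e u2 s].
  case: (boolP (e y z)) => eyz; last first.
    exists z; split => //; first exact: notin_other mC mM nMC v1C v1M zM zv.
    by rewrite (mc_adj mM v1M zM) // eq_sym.
  case: (boolP (e y z')) => eyz'; last first.
    exists z'; split => //; first exact: notin_other mC mM' nM'C v1C v1M' z'M' z'v.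
    by rewrite (mc_adj mM' v1M' z'M') // eq_sym.
  exfalso; apply: dfree; exists y, a, z, z'; split.
  - rewrite /= !inE !negb_or ya (neq_of_adj eyz) (neq_of_adj eyz') /=.
    have eaz : e a z by rewrite esym.
    have eaz' : e a z' by rewrite esym.
    rewrite (neq_of_adj eaz) (neq_of_adj eaz') /=.
    rewrite andbT; apply/negP => /eqP E; subst z'.
    move: zv; rewrite (mc_meet mM mM' nMM' zM z'M' v1M v1M') eqxx //.
  - by rewrite eya eyz eyz' esym eza esym ez'a.
  - exact: nzz'.
have pC : forall p, p \in S -> p != v1 -> p \notin C.
  move=> p pS pv; apply: contra pv => pC; apply/eqP.
  exact: (ms_unique mC mS pC pS v1C v1S).
case: (boolP [exists u, [&& u \in C, u != v1, u != u2 &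
          [forall s, (s \in S) ==> (s != v1) ==> e u s ==> e y s]]]).
  case/existsP => u /and4P [uC uv1 uu2 /forallP Hu].
  have thu := three_C mC c3 v1C uC uv1 th1.
  case: (two_noC C thu) => K [K' [mK mK' /andP [uK uK'] nKK' /andP [nKC nK'C]]].
  case: (meet mK mS) => t tK tS.
  case: (meet mK' mS) => t' tK' t'S.
  have uS : u \notin S.
    apply/negP => uS; move: (ms_nadj mS uS v1S).
    by rewrite (mc_adj mC uC v1C uv1).
  have tu : t != u by apply: contraNneq uS => <-.
  have t'u : t' != u by apply: contraNneq uS => <-.
  have tC : t \notin C := notin_other mC mK nKC uC uK tK tu.
  have t'C : t' \notin C := notin_other mC mK' nK'C uC uK' tK' t'u.
  have tv1 : t != v1 by apply: contraNneq tC => ->.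
  have t'v1 : t' != v1 by apply: contraNneq t'C => ->.
  have eut : e u t by rewrite (mc_adj mK uK tK) // eq_sym.
  have eut' : e u t' by rewrite (mc_adj mK' uK' tK') // eq_sym.
  have tt' : t != t'.
    apply/negP => /eqP E; subst t'.
    by move: tu; rewrite (mc_meet mK mK' nKK' tK tK' uK uK') eqxx.
  have eyt : e y t by move: (Hu t); rewrite tS tv1 eut.
  have eyt' : e y t' by move: (Hu t'); rewrite t'S t'v1 eut'.
  have ntt' := ms_nadj mS tS t'S.
  case: (line_exists eyt) => Lam mLam /andP [yLam tLam].
  have v1Lam : v1 \notin Lam.
    apply/negP => v1Lam; move: nyv1.
    rewrite (mc_adj mLam yLam v1Lam) //.
    by apply: contraNneq yC => ->.
  case: (GQ1 mLam v1Lam) => w wLam ev1w.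
  have wt : w != t by apply: contraTneq ev1w => ->; rewrite (negbTE (ms_nadj mS v1S tS)).
  have wy : w != y by apply: contraTneq ev1w => ->; rewrite esym (negbTE nyv1).
  have ewt : e w t := mc_adj mLam wLam tLam wt.
  have wC : w \notin C.
    apply/negP => wC.
    have wu : w = u.
      by apply: (F1 mC tC wC uC); rewrite esym.
    subst w.
    have eyu : e y u by rewrite (mc_adj mLam yLam wLam) // eq_sym.
    by move: uu2; rewrite (F1 mC yC uC u2C eyu) ?eqxx // esym.
  case: (line_exists ev1w) => N mN /andP [v1N wN].
  have nCN : C != N by apply: contraNneq wC => ->.
  have wv1 : w != v1 by rewrite eq_sym (neq_of_adj ev1w).
  case: (FIB mS v1S mC mN nCN v1C v1N wN wv1) => u' /andP [u'C u'v1] Hw.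
  have eu't : e u' t by rewrite -Hw.
  have uu' := fiber_disj mS v1S mC v1C uC u'C tS tv1 eut eu't.
  subst u'.
  have ewt' : e w t' by rewrite Hw.
  have t'Lam : t' \notin Lam.
    apply/negP => t'Lam; move: ntt'.
    by rewrite (mc_adj mLam tLam t'Lam tt').
  move: wy; rewrite (F1 mLam t'Lam wLam yLam) ?eqxx //; by rewrite esym.
rewrite negb_exists => /forallP H.
apply: (no_dom (X := y |: (zz |: [set p in S | [&& p != v1, ~~ e y p & ~~ e zz p]])) (C := C)).
- apply/stableP => p q; rewrite !inE.
  move=> /or3P [/eqP-> | /eqP-> | /and4P [pS pv1 nyp nzp]]
         /or3P [/eqP-> | /eqP-> | /and4P [qS qv1 nyq nzq]];
    rewrite ?eirr // 1?esym //.
  first [exact: ms_nadj mS pS qS | exact: ms_nadj mS qS pS].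
- exact: mC.
- move=> p; rewrite !inE => /or3P [/eqP-> // | /eqP-> // | /and4P [pS pv1 _ _]].
  exact: pC.
- move=> c cC.
  case: (eqVneq c v1) => [-> | cv1]; first by exists zz; rewrite ?inE ?eqxx ?orbT.
  case: (eqVneq c u2) => [-> | cu2]; first by exists y; rewrite ?inE ?eqxx.
  move: (H c); rewrite cC cv1 cu2 /= negb_forall => /existsP [p].
  rewrite !negb_imply => /and4P [pS pv1 ecp nyp].
  exists p => //.
  have nzp : ~~ e zz p.
    rewrite Hzz //; apply/negP => eu2p.
    by move: cu2; rewrite (fiber_disj mS v1S mC v1C cC u2C pS pv1 ecp eu2p) eqxx.
  by rewrite !inE pS pv1 nyp nzp !orbT.
Qed.

Lemma mc_ge2 C : maximal_clique e C -> 1 < #|C|.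
Proof.
move=> mC.
have [x xC] : exists x, x \in C.
  case: conn => ne _; case/card_gt0P: ne => z _.
  apply/set0Pn; apply/negP => /eqP C0.
  move/maxcliqueP: mC => [_ /(_ [set z] (clique1 z))].
  by rewrite C0 sub0set => /(_ isT) /setP /(_ z); rewrite !inE eqxx.
case: (nbr_out mC xC (no_simplicial x)) => s exs sC.
case: (ltnP 1 #|C|) => // small; exfalso.
have sub : C \subset [set x; s].
  apply/subsetP => y yC; rewrite !inE; apply/orP; left.
  move/card_le1P: small => H; move: (H x xC y); rewrite yC inE => E.
  by rewrite -E.
have cl : is_clique e [set x; s] := clique2 exs.
move/maxcliqueP: mC => [_ /(_ _ cl sub)] E.
by move: sC; rewrite -E !inE eqxx orbT.
Qed.

Section K2.
Variables (a b : T) (C : {set T}).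
Hypothesis mC : maximal_clique e C.
Hypothesis aC : a \in C.
Hypothesis bC : b \in C.
Hypothesis ab : a != b.
Hypothesis c2 : #|C| = 2.

Lemma C_ab u : u \in C -> (u == a) || (u == b).
Proof.
move=> uC; apply/negP => /negP; rewrite negb_or => /andP [ua ub].
have : 2 < #|C| by apply/card_gt2P; exists a, b, u; split; split; rewrite // eq_sym.
by rewrite c2.
Qed.

Lemma eab : e a b. Proof. exact: mc_adj mC aC bC ab. Qed.

Lemma out_C u : u != a -> u != b -> u \notin C.
Proof. by move=> ua ub; apply/negP => /C_ab; rewrite (negbTE ua) (negbTE ub). Qed.

Lemma cover u : e b u || e a u.
Proof.
case: (eqVneq u a) => [-> | ua]; first by rewrite esym eab.
case: (eqVneq u b) => [-> | ub]; first by rewrite eab orbT.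
case: (GQ1 mC (out_C ua ub)) => l lC eul.
by case/orP: (C_ab lC) => /eqP E; subst l; rewrite esym in eul; rewrite eul ?orbT.
Qed.

Lemma not_both u : e b u -> e a u -> False.
Proof.
move=> ebu eau.
have ua : u != a by apply: contraTneq eau => ->; rewrite eirr.
have ub : u != b by apply: contraTneq ebu => ->; rewrite eirr.
move: ab; rewrite (F1 mC (out_C ua ub) aC bC) ?eqxx // esym //.
Qed.

Lemma complete x y : e b x -> e a y -> e x y.
Proof.
move=> ebx eay.
case: (eqVneq x a) => [-> // | xa].
case: (eqVneq y b) => [-> | yb]; first by rewrite esym.
have xb : x != b by apply: contraTneq ebx => ->; rewrite eirr.
have ya : y != a by apply: contraTneq eay => ->; rewrite eirr.
apply/negPn/negP => nxy; apply: (no_dom (X := [set x; y]) (C := C)) => //.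
- exact: stable2.
- by move=> z; rewrite !inE => /orP [] /eqP ->; apply: out_C.
- move=> c /C_ab /orP [] /eqP ->.
    by exists y; rewrite ?inE ?eqxx ?orbT.
  by exists x; rewrite ?inE ?eqxx.
Qed.

Lemma stableX x x' : e b x -> e b x' -> ~~ e x x'.
Proof.
move=> ebx ebx'; apply/negP => exx'.
case: (nbr_out mC aC (no_simplicial a)) => s eas sC.
have sb : s != b by apply: contraNneq sC => ->.
have nbs : ~~ e b s by apply/negP => ebs; apply: (not_both ebs eas).
have exs := complete ebx eas.
have ex's := complete ebx' eas.
apply: dfree; exists x, x', b, s; split.
- rewrite /= !inE !negb_or (neq_of_adj exx') (neq_of_adj exs) (neq_of_adj ex's).
  have ex'b : e x' b by rewrite esym.
  have exb : e x b by rewrite esym.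
  by rewrite (neq_of_adj exb) (neq_of_adj ex'b) eq_sym sb.
- by rewrite exx' esym ebx exs esym ebx' ex's.
- exact: nbs.
Qed.

End K2.

Section K2iso.
Variables (a b : T) (C : {set T}).
Hypothesis mC : maximal_clique e C.
Hypothesis aC : a \in C.
Hypothesis bC : b \in C.
Hypothesis ab : a != b.
Hypothesis c2 : #|C| = 2.

Let X := [set u | e b u].
Let Y := [set u | e a u].
Let eba : e b a. Proof. by rewrite esym (eab mC aC bC ab). Qed.
Let aX : a \in X. Proof. by rewrite inE eba. Qed.
Let bY : b \in Y. Proof. by rewrite inE (eab mC aC bC ab). Qed.
Let ba : b != a. Proof. by rewrite eq_sym. Qed.
Let c2' : #|C| = 2. Proof. exact: c2. Qed.

Definition gK (u : T) : ('I_#|X| + 'I_#|Y|)%type :=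
  if u \in X then inl (enum_rank_in aX u) else inr (enum_rank_in bY u).

Lemma notXY u : u \in X -> u \in Y -> False.
Proof. rewrite !inE => h1 h2; exact: (not_both mC aC bC ab c2 h1 h2). Qed.

Lemma XorY u : u \notin X -> u \in Y.
Proof. by rewrite !inE; case/orP: (cover mC aC bC ab c2 u) => ->. Qed.

Lemma gK_adj x y : e x y = Kmn_rel #|X| #|Y| (gK x) (gK y).
Proof.
rewrite /gK.
case: (boolP (x \in X)) => xX; case: (boolP (y \in X)) => yX /=.
- apply/negbTE; move: xX yX; rewrite !inE => h1 h2; exact: (stableX mC aC bC ab c2 h1 h2).
- by apply: (complete mC aC bC ab c2); [move: xX; rewrite inE | move: (XorY yX); rewrite inE].
- rewrite esym; apply: (complete mC aC bC ab c2); [move: yX; rewrite inE | move: (XorY xX); rewrite inE] => //.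
- apply/negbTE; move: (XorY xX) (XorY yX); rewrite !inE => h1 h2.
  exact: (stableX mC bC aC ba c2 h1 h2).
Qed.

Lemma gK_bij : bijective gK.
Proof.
apply: inj_surj_bij.
- move=> x y; rewrite /gK.
  case: (boolP (x \in X)) => xX; case: (boolP (y \in X)) => yX //= [] E.
    exact: (enum_rank_in_inj xX yX E).
  exact: (enum_rank_in_inj (XorY xX) (XorY yX) E).
- case=> [i | j].
    exists (enum_val i); rewrite /gK (enum_valP i) ; congr inl; exact: enum_valK_in.
  exists (enum_val j).
  have jY : enum_val j \in Y := enum_valP j.
  have jX : enum_val j \notin X by apply/negP => jX; apply: (notXY jX jY).
  by rewrite /gK (negbTE jX) enum_valK_in.
Qed.

Lemma K_size : (2 <= #|X|) /\ (2 <= #|Y|).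
Proof.
split; apply/card_gt1P.
  case: (nbr_out mC bC (no_simplicial b)) => t ebt tC.
  exists a, t; split => //; first by rewrite inE.
  by apply: contraNneq tC => <-.
case: (nbr_out mC aC (no_simplicial a)) => t eat tC.
exists b, t; split => //; first by rewrite inE.
by apply: contraNneq tC => <-.
Qed.

Lemma K_case : exists m n : nat, [/\ 2 <= m, 2 <= n & isomorphic e (Kmn_rel m n)].
Proof.
exists #|X|, #|Y|; case: K_size => h1 h2; split => //.
exists gK; split; [exact: gK_bij | exact: gK_adj].
Qed.

End K2iso.

Definition proj (L : {set T}) u := if u \in L then u else odflt u [pick l in L | e u l].

Lemma projP L u : maximal_clique e L -> proj L u \in L.
Proof.
move=> mL; rewrite /proj; case: ifP => // uL.
case: pickP => [l /andP [] // | H].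
case: (GQ1 mL (negbT uL)) => l lL eul.
by move: (H l); rewrite lL eul.
Qed.

Lemma proj_in (L : {set T}) u : u \in L -> proj L u = u.
Proof. by rewrite /proj => ->. Qed.

Lemma proj_adj L u : maximal_clique e L -> u \notin L -> e u (proj L u).
Proof.
move=> mL uL; rewrite /proj (negbTE uL).
case: pickP => [l /andP [] // | H].
case: (GQ1 mL uL) => l lL eul.
by move: (H l); rewrite lL eul.
Qed.

Lemma proj_eq L u l : maximal_clique e L -> u \notin L -> l \in L -> e u l -> proj L l = l /\ proj L u = l.
Proof.
move=> mL uL lL eul; split; first exact: proj_in.
exact: (F1 mL uL (projP u mL) lL (proj_adj mL uL) eul).
Qed.

Lemma proj_eq' L u l : maximal_clique e L -> u \notin L -> l \in L -> e u l -> proj L u = l.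
Proof. by move=> mL uL lL eul; case: (proj_eq mL uL lL eul). Qed.

Lemma card_le_lines S v C N : maximal_stable e S -> v \in S ->
  maximal_clique e C -> maximal_clique e N -> C != N -> v \in C -> v \in N ->
  #|N| <= #|C|.
Proof.
move=> mS vS mC mN nCN vC vN.
pose good w u := [&& u \in C, u != v & [forall s, (s \in S) ==> (s != v) ==> (e w s == e u s)]].
pose f w := odflt v [pick u | good w u].
have fP : forall w, w \in N -> w != v -> good w (f w).
  move=> w wN wv; rewrite /f; case: pickP => [u // | H].
  case: (FIB mS vS mC mN nCN vC vN wN wv) => u /andP [uC uv] Hu.
  move: (H u); rewrite /good uC uv /=; move/negP; case; apply/forallP => s.
  by apply/implyP => sS; apply/implyP => sv; rewrite Hu.
have finj : {in N :\ v &, injective f}.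
  move=> w w'; rewrite !inE => /andP [wv wN] /andP [w'v w'N] E.
  have /and3P [_ _ /forallP H] := fP w wN wv.
  have /and3P [_ _ /forallP H'] := fP w' w'N w'v.
  have wS : w \notin S.
    apply/negP => wS; move: (ms_nadj mS wS vS); by rewrite (mc_adj mN wN vN wv).
  case: (two_nbrs mS wS vS (no_simplicial w)) => s0 s0S /andP [ews0 s0v].
  have eus0 : e (f w) s0 by move: (H s0); rewrite s0S s0v ews0 /= => /eqP <-.
  have ew's0 : e w' s0 by move: (H' s0); rewrite s0S s0v -E eus0 /= => /eqP ->.
  have s0N : s0 \notin N.
    by apply: contra s0v => s0N; apply/eqP; exact: (ms_unique mN mS s0N s0S vN vS).
  by apply: (F1 mN s0N wN w'N); rewrite esym.
have sub : f @: (N :\ v) \subset C :\ v.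
  apply/subsetP => u /imsetP [w]; rewrite !inE => /andP [wv wN] ->.
  by have /and3P [-> -> _] := fP w wN wv.
have := subset_leq_card sub; rewrite (card_in_imset finj).
by rewrite (cardsD1 v N) (cardsD1 v C) vN vC.
Qed.

Section Grid.
Variables (C D : {set T}) (v1 : T).
Hypothesis mC : maximal_clique e C.
Hypothesis c3 : 2 < #|C|.
Hypothesis v1C : v1 \in C.
Hypothesis mD : maximal_clique e D.
Hypothesis v1D : v1 \in D.
Hypothesis nDC : D != C.

Lemma not_three u : ~ three u.
Proof.
move=> th.
case: (boolP (u \in C)) => uC; first exact: (EX mC c3 uC th).
case: (GQ1 mC uC) => c cC euc.
case: (line_exists euc) => K mK /andP [uK cK].
have nKC : K != C by apply: contraNneq uC => <-.
exact: (EX mK (line3 mC c3 cC mK cK nKC) uK th).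
Qed.

Lemma only_two u L1 L2 L3 : maximal_clique e L1 -> maximal_clique e L2 -> maximal_clique e L3 ->
  u \in L1 -> u \in L2 -> u \in L3 -> L1 != L2 -> L1 != L3 -> L3 = L2.
Proof.
move=> m1 m2 m3 u1 u2 u3 n12 n13; apply/eqP/negPn/negP => n32.
apply: (not_three (u := u)); exists L1, L2, L3; split => //.
  by rewrite u1 u2 u3.
by rewrite n12 n13 eq_sym n32.
Qed.

Lemma adj_proj L u u' : maximal_clique e L -> u != u' -> proj L u = proj L u' -> e u u'.
Proof.
move=> mL uu' E.
case: (boolP (u \in L)) => uL.
  case: (boolP (u' \in L)) => u'L.
    by move: E uu'; rewrite !proj_in // => ->; rewrite eqxx.
  by move: (proj_adj mL u'L); rewrite -E proj_in // esym.
case: (boolP (u' \in L)) => u'L.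
  by move: (proj_adj mL uL); rewrite E proj_in.
set c := proj L u' in E.
have cL : c \in L by exact: projP.
have euc : e u c by rewrite -E; exact: proj_adj.
have eu'c : e u' c by exact: proj_adj.
case: (line_exists euc) => K mK /andP [uK cK].
case: (line_exists eu'c) => K' mK' /andP [u'K' cK'].
have nLK : L != K by apply: contraNneq uL => ->.
have nLK' : L != K' by apply: contraNneq u'L => ->.
have E' := only_two mL mK mK' cL cK cK' nLK nLK'.
subst K'.
exact: (mc_adj mK uK u'K' uu').
Qed.

Lemma C_D_meet u : u \in C -> u \in D -> u = v1.
Proof. move=> uC uD; have nCD : C != D by rewrite eq_sym. exact: (mc_meet mC mD nCD uC uD v1C v1D). Qed.

Lemma projD_C c : c \in C -> proj D c = v1.
Proof.
move=> cC; case: (boolP (c \in D)) => cD; first by rewrite proj_in // (C_D_meet cC cD).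
apply: (proj_eq' mD cD v1D); rewrite (mc_adj mC cC v1C) //.
by apply: contraNneq cD => ->.
Qed.

Lemma projC_D r : r \in D -> proj C r = v1.
Proof.
move=> rD; case: (boolP (r \in C)) => rC; first by rewrite proj_in // (C_D_meet rC rD).
apply: (proj_eq' mC rC v1C); rewrite (mc_adj mD rD v1D) //.
by apply: contraNneq rC => ->.
Qed.

Lemma lineD u : u \notin C -> e u v1 -> u \in D.
Proof.
move=> uC euv.
case: (line_exists euv) => K mK /andP [uK vK].
have nCD : C != D by rewrite eq_sym.
have nCK : C != K by apply: contraNneq uC => ->.
by rewrite -(only_two mC mD mK v1C v1D vK nCD nCK).
Qed.

Lemma col_v1 u : u \notin C -> proj C u = v1 -> u \in D.
Proof. by move=> uC E; apply: lineD => //; rewrite -E; apply: proj_adj. Qed.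

Lemma adj_rc u u' : e u u' -> (proj C u == proj C u') || (proj D u == proj D u').
Proof.
move=> euu'.
case: (eqVneq (proj C u) (proj C u')) => //= ncc.
case: (boolP (u \in C)) => uC.
  case: (boolP (u' \in C)) => u'C; first by rewrite !projD_C.
  by move: ncc; rewrite (proj_in uC) (proj_eq' mC u'C uC) ?eqxx // esym.
case: (boolP (u' \in C)) => u'C.
  by move: ncc; rewrite (proj_in u'C) (proj_eq' mC uC u'C euu') eqxx.
case: (eqVneq (proj C u) v1) => [cv | cv].
  have uD := col_v1 uC cv.
  have u'D : u' \notin D by apply: contra ncc => u'D; rewrite cv projC_D.
  by rewrite (proj_in uD) (proj_eq' mD u'D uD) // esym.
case: (eqVneq (proj C u') v1) => [cv' | cv'].
  have u'D := col_v1 u'C cv'.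
  have uD : u \notin D by apply: contra ncc => uD; rewrite cv' projC_D.
  by rewrite (proj_in u'D) (proj_eq' mD uD u'D euu').
have uD : u \notin D by apply: contra cv => uD; rewrite projC_D.
have u'D : u' \notin D by apply: contra cv' => u'D; rewrite projC_D.
set r := proj D u.
have rD : r \in D by apply: projP.
have eur : e u r by apply: proj_adj.
have rv : r != v1.
  apply: contra cv => /eqP rv; apply/eqP; apply: (proj_eq' mC uC v1C); by rewrite -rv.
have rC : r \notin C by apply: contra rv => rC; apply/eqP; apply: C_D_meet.
set c := proj C u in ncc cv.
have cC : c \in C by apply: projP.
have euc : e u c by apply: proj_adj.
case: (line_exists euc) => K mK /andP [uK cK].
case: (line_exists eur) => R mR /andP [uR rR].
case: (line_exists euu') => Lam mLam /andP [uLam u'Lam].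
have nKR : K != R.
  apply/negP => /eqP E; subst R.
  have rc : r != c by apply: contraNneq rC => ->.
  have erc := mc_adj mK rR cK rc.
  by move: cv; rewrite -(projC_D rD) (proj_eq' mC rC cC erc) eqxx.
have nKLam : K != Lam.
  apply/negP => /eqP E; subst Lam.
  have u'c : u' != c by apply: contraNneq u'C => ->.
  have eu'c := mc_adj mK u'Lam cK u'c.
  by move: ncc; rewrite (proj_eq' mC u'C cC eu'c) eqxx.
have E := only_two mK mR mLam uK uR uLam nKR nKLam.
subst Lam.
have u'r : u' != r by apply: contraNneq u'D => ->.
by rewrite (proj_eq' mD u'D rD (mc_adj mR u'Lam rR u'r)) eqxx.
Qed.

Lemma inj_rc_C u u' : u \in C -> proj C u = proj C u' -> proj D u = proj D u' -> u = u'.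
Proof.
move=> uC Ec Ed; apply/eqP/negPn/negP => uu'.
case: (boolP (u' \in C)) => u'C.
  by move: uu'; rewrite -(proj_in uC) Ec (proj_in u'C) eqxx.
have eu'u : e u' u by rewrite -(proj_in uC) Ec; apply: proj_adj.
have Ed' : proj D u' = v1 by rewrite -Ed projD_C.
case: (boolP (u' \in D)) => u'D.
  by move: u'C; rewrite -(proj_in u'D) Ed' v1C.
have eu'v : e u' v1 by rewrite -Ed'; apply: proj_adj.
by move: u'D; rewrite (lineD u'C eu'v).
Qed.

Lemma inj_rc u u' : proj C u = proj C u' -> proj D u = proj D u' -> u = u'.
Proof.
move=> Ec Ed.
case: (boolP (u \in C)) => uC; first exact: inj_rc_C.
case: (boolP (u' \in C)) => u'C; first exact: (Logic.eq_sym (inj_rc_C u'C (Logic.eq_sym Ec) (Logic.eq_sym Ed))).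
apply/eqP/negPn/negP => uu'.
set c := proj C u' in Ec.
case: (eqVneq c v1) => [cv | cv].
  have uD : u \in D by apply: col_v1; rewrite // Ec.
  have u'D : u' \in D by apply: col_v1.
  by move: uu'; rewrite -(proj_in uD) Ed (proj_in u'D) eqxx.
have uD : u \notin D by apply: contra cv => uD; rewrite -Ec projC_D.
have u'D : u' \notin D by apply: contra cv => u'D; rewrite /c projC_D.
have cC : c \in C by apply: projP.
have euc : e u c by rewrite -Ec; apply: proj_adj.
have eu'c : e u' c by apply: proj_adj.
set r := proj D u' in Ed.
have rD : r \in D by apply: projP.
have eur : e u r by rewrite -Ed; apply: proj_adj.
have eu'r : e u' r by apply: proj_adj.
have euu' : e u u' := adj_proj mC uu' Ec.
case: (line_exists euu') => Lam mLam /andP [uLam u'Lam].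
have cLam : c \in Lam.
  apply/negPn/negP => cLam; move: uu'.
  by rewrite (F1 mLam cLam uLam u'Lam) ?eqxx // esym.
have rLam : r \in Lam.
  apply/negPn/negP => rLam; move: uu'.
  by rewrite (F1 mLam rLam uLam u'Lam) ?eqxx // esym.
have rv : r != v1.
  apply: contra cv => /eqP rv; apply/eqP; apply: (proj_eq' mC u'C v1C); by rewrite -rv.
have rC : r \notin C by apply: contra rv => rC; apply/eqP; apply: C_D_meet.
have rc : r != c by apply: contraNneq rC => ->.
have erc := mc_adj mLam rLam cLam rc.
by move: cv; rewrite -(projC_D rD) (proj_eq' mC rC cC erc) eqxx.
Qed.

Lemma surj_rc r c : r \in D -> c \in C -> exists u, proj D u = r /\ proj C u = c.
Proof.
move=> rD cC.
case: (eqVneq r v1) => [-> | rv].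
  by exists c; rewrite projD_C // proj_in.
case: (eqVneq c v1) => [-> | cv].
  by exists r; rewrite projC_D // proj_in.
have rC : r \notin C by apply: contra rv => rC; apply/eqP; apply: C_D_meet.
case: (nbr_out mC cC (no_simplicial c)) => x ecx xC.
case: (line_exists ecx) => K mK /andP [cK xK].
have nKC : K != C by apply: contraNneq xC => <-.
have rK : r \notin K.
  apply/negP => rK.
  have rc : r != c by apply: contraNneq rC => ->.
  move: cv; rewrite -(projC_D rD) (proj_eq' mC rC cC (mc_adj mK rK cK rc)) eqxx //.
case: (GQ1 mK rK) => u uK eru.
have uc : u != c.
  apply: contraTneq eru => ->; apply/negP => erc.
  by move: cv; rewrite -(projC_D rD) (proj_eq' mC rC cC erc) eqxx.
have uC : u \notin C := notin_other mC mK nKC cC cK uK uc.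
have euc : e u c := mc_adj mK uK cK uc.
have pc : proj C u = c := proj_eq' mC uC cC euc.
have uD : u \notin D.
  apply: contra cv => uD; rewrite -pc; apply/eqP.
  apply: (proj_eq' mC uC v1C); rewrite (mc_adj mD uD v1D) //.
  by apply: contraNneq uC => ->.
exists u; split => //.
by apply: (proj_eq' mD uD rD); rewrite esym.
Qed.

Lemma card_DC : #|D| = #|C|.
Proof.
case: (ms_exists (stable1 v1)) => S mS sub.
have v1S : v1 \in S by rewrite (subsetP sub) // inE.
have nCD : C != D by rewrite eq_sym.
apply/eqP; rewrite eqn_leq (card_le_lines mS v1S mC mD nCD v1C v1D).
exact: (card_le_lines mS v1S mD mC nDC v1D v1C).
Qed.

Definition gG (u : T) : LV #|C| :=
  mkE (cast_ord card_DC (enum_rank_in v1D (proj D u))) (enum_rank_in v1C (proj C u)).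

Lemma eD_inj u u' : cast_ord card_DC (enum_rank_in v1D (proj D u)) =
   cast_ord card_DC (enum_rank_in v1D (proj D u')) -> proj D u = proj D u'.
Proof. by move/cast_ord_inj; apply: enum_rank_in_inj; apply: projP. Qed.

Lemma eC_inj u u' : enum_rank_in v1C (proj C u) = enum_rank_in v1C (proj C u') ->
  proj C u = proj C u'.
Proof. by apply: enum_rank_in_inj; apply: projP. Qed.

Lemma gG_inj : injective gG.
Proof.
move=> u u' /mkE_inj [E1 E2].
exact: (inj_rc (eC_inj E2) (eD_inj E1)).
Qed.

Lemma gG_bij : bijective gG.
Proof.
apply: inj_surj_bij; first exact: gG_inj.
move=> E; case: (mkE_surj E) => i [j ->].
set r := enum_val (cast_ord (Logic.eq_sym card_DC) i).
set c := enum_val j.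
have rD : r \in D by apply: enum_valP.
have cC : c \in C by apply: enum_valP.
case: (surj_rc rD cC) => u [Er Ec].
exists u; rewrite /gG Er Ec /r /c !enum_valK_in.
by rewrite cast_ordKV.
Qed.

Lemma gG_adj x y : e x y = @line_rel _ (Kmn_rel #|C| #|C|) (gG x) (gG y).
Proof.
rewrite /gG line_rel_mkE.
case: (eqVneq x y) => [-> | xy]; first by rewrite eirr !eqxx.
have -> : (cast_ord card_DC (enum_rank_in v1D (proj D x)) ==
           cast_ord card_DC (enum_rank_in v1D (proj D y))) = (proj D x == proj D y).
  by apply/eqP/eqP => [/eD_inj // | ->].
have -> : (enum_rank_in v1C (proj C x) == enum_rank_in v1C (proj C y)) = (proj C x == proj C y).
  by apply/eqP/eqP => [/eC_inj // | ->].
have -> : (proj D x != proj D y) || (proj C x != proj C y).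
  rewrite -negb_and; apply/negP => /andP [/eqP h1 /eqP h2].
  by move: xy; rewrite (inj_rc h2 h1) eqxx.
rewrite /=; apply/idP/idP.
  by move/adj_rc; rewrite orbC.
by case/orP => /eqP h; [exact: (adj_proj mD xy h) | exact: (adj_proj mC xy h)].
Qed.

Lemma grid_case : exists n : nat, 3 <= n /\ isomorphic e (@line_rel _ (Kmn_rel n n)).
Proof.
exists #|C|; split => //.
exists gG; split; [exact: gG_bij | exact: gG_adj].
Qed.

End Grid.

Lemma hard_NS : (exists m n : nat, [/\ 2 <= m, 2 <= n & isomorphic e (Kmn_rel m n)]) \/
                (exists n : nat, 3 <= n /\ isomorphic e (@line_rel _ (Kmn_rel n n))).
Proof.
have [z _] : exists z : T, true.
  by case: conn => ne _; case/card_gt0P: ne => z _; exists z.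
case: (mc_exists (clique1 z)) => C mC sub.
have zC : z \in C by rewrite (subsetP sub) // inE.
have c2 := mc_ge2 mC.
case: (ltnP 2 #|C|) => c3.
  right.
  case: (nbr_out mC zC (no_simplicial z)) => x ezx xC.
  case: (line_exists ezx) => D mD /andP [zD xD].
  have nDC : D != C by apply: contraNneq xC => <-.
  exact: (grid_case mC c3 zC mD zD nDC).
left.
have c2' : #|C| = 2 by apply/eqP; rewrite eqn_leq c3 c2.
case/card_gt1P: c2 => a [b [aC bC ab]].
exact: (K_case mC aC bC ab c2').
Qed.

End NS.

End Main.

Section Transfer.
Variables (T U : finType) (e : rel T) (f : rel U) (g : T -> U) (h : U -> T).
Hypothesis gK : cancel g h.
Hypothesis hK : cancel h g.
Hypothesis ef : forall x y, e x y = f (g x) (g y).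

Lemma ef' a b : f a b = e (h a) (h b). Proof. by rewrite ef !hK. Qed.

Lemma maxset_img (P : {set T} -> bool) (Q : {set U} -> bool) A :
  (forall A, P A -> Q (g @: A)) -> (forall B, Q B -> P (h @: B)) ->
  maxset P A -> maxset Q (g @: A).
Proof.
move=> PQ QP /maxsetP [PA mA]; apply/maxsetP; split; first exact: PQ.
move=> B QB sub.
have sub' : A \subset h @: B.
  apply/subsetP => a aA; apply/imsetP; exists (g a); last by rewrite gK.
  by rewrite (subsetP sub) // imset_f.
have E := mA _ (QP _ QB) sub'.
rewrite -E -imset_comp; apply/setP => b; apply/idP/imsetP.
  by move=> bB; exists b; rewrite //= hK.
by case=> b' b'B ->; rewrite /= hK.
Qed.

Lemma clique_img A : is_clique e A -> is_clique f (g @: A).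
Proof.
move/cliqueP => H; apply/cliqueP => x y /imsetP [a aA ->] /imsetP [b bA ->] nab.
rewrite -ef; apply: H => //; by apply: contraNneq nab => ->.
Qed.

Lemma clique_pre B : is_clique f B -> is_clique e (h @: B).
Proof.
move/cliqueP => H; apply/cliqueP => x y /imsetP [a aB ->] /imsetP [b bB ->] nab.
rewrite ef !hK; apply: H => //; by apply: contraNneq nab => ->.
Qed.

Lemma stable_img A : is_stable e A -> is_stable f (g @: A).
Proof.
move/stableP => H; apply/stableP => x y /imsetP [a aA ->] /imsetP [b bA ->].
rewrite -ef; exact: H.
Qed.

Lemma stable_pre B : is_stable f B -> is_stable e (h @: B).
Proof.
move/stableP => H; apply/stableP => x y /imsetP [a aB ->] /imsetP [b bB ->].
rewrite ef !hK; exact: H.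
Qed.

Lemma CIS_transfer : CIS f -> CIS e.
Proof.
move=> cf C S mC mS.
have mC' : maximal_clique f (g @: C) := maxset_img clique_img clique_pre mC.
have mS' : maximal_stable f (g @: S) := maxset_img stable_img stable_pre mS.
case/set0Pn: (cf _ _ mC' mS') => y; rewrite inE => /andP [/imsetP [c cC ->] /imsetP [s sS E]].
have cs : c = s by rewrite -(gK c) E gK.
by apply/set0Pn; exists c; rewrite inE cC cs sS.
Qed.
End Transfer.

Lemma iso_CIS (T U : finType) (e : rel T) (f : rel U) : isomorphic e f -> CIS f -> CIS e.
Proof.
case=> g [[h gK hK] ef]; exact: (CIS_transfer gK hK ef).
Qed.

Lemma cs_CIS (T : finType) (e : rel T) : symmetric e -> irreflexive e ->
  clique_simplicial e -> CIS e.
Proof.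
move=> esym eirr cs C S mC mS.
case/existsP: (cs C mC) => v /andP [sv /eqP CE].
case: (boolP (v \in S)) => vS.
  by apply/set0Pn; exists v; rewrite inE vS CE /cnbhd !inE eqxx.
case: (ms_dom esym eirr mS vS) => s sS evs.
by apply/set0Pn; exists s; rewrite inE sS CE /cnbhd !inE evs orbT.
Qed.

Section KmnCIS.
Variables (m n : nat).
Hypothesis m0 : 0 < m.
Hypothesis n0 : 0 < n.
Let K := Kmn_rel m n.

Definition isl (x : ('I_m + 'I_n)%type) := if x is inl _ then true else false.

Lemma K_adj x y : K x y = (isl x != isl y).
Proof. by case: x; case: y. Qed.

Lemma ms_nonempty (V : finType) (r : rel V) (S : {set V}) (x0 : V) :
  irreflexive r -> maximal_stable r S -> exists s, s \in S.
Proof.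
move=> irr /maxsetP [_ mS]; case: (set_0Vmem S) => [S0 | [s sS]]; last by exists s.
have st : is_stable r [set x0] by apply/stableP => a b; rewrite !inE => /eqP-> /eqP->; rewrite irr.
by move: (mS _ st); rewrite S0 sub0set => /(_ isT) /setP /(_ x0); rewrite !inE eqxx.
Qed.

Lemma Kmn_CIS : CIS K.
Proof.
move=> C S mC mS.
have l0 : ('I_m + 'I_n)%type := inl (Ordinal m0).
have r0 : ('I_m + 'I_n)%type := inr (Ordinal n0).
have irr : irreflexive K by case.
case: (ms_nonempty l0 irr mS) => s sS.
have side : forall b, exists2 c, c \in C & isl c == b.
  move=> b; case: (boolP [exists c in C, isl c == b]) => [/existsP [c /andP [? ?]] | ].
    by exists c.
  rewrite negb_exists => /forallP H; exfalso.
  have [x xb] : exists x : ('I_m + 'I_n)%type, isl x = b.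
    by case: b {H}; [exists (inl (Ordinal m0)) | exists (inr (Ordinal n0))].
  move/maxsetP: mC => [cC mx].
  have cl : is_clique K (x |: C).
    apply/cliqueP => a c; rewrite !inE.
    have oth : forall y, y \in C -> K x y.
      move=> y yC; move: (H y); rewrite yC /= => nb; rewrite K_adj xb.
      by rewrite eq_sym.
    move=> /orP [/eqP-> | aC] /orP [/eqP-> | cC'].
    - by rewrite eqxx.
    - by move=> _; apply: oth.
    - by move=> _; rewrite K_adj eq_sym -K_adj; apply: oth.
    - by move/cliqueP: cC; apply.
  have := mx _ cl (subsetUr _ _) => E.
  have xC : x \in C by rewrite -E !inE eqxx.
  by move: (H x); rewrite xC xb eqxx.
case: (side (isl s)) => c cC /eqP cs.
apply/set0Pn; exists c; rewrite inE cC /=.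
move/maxsetP: mS => [sS' mx].
have st : is_stable K (c |: S).
  apply/stableP => a b; rewrite !inE.
  have sameS : forall y, y \in S -> isl y = isl s.
    move=> y yS; apply/eqP/negPn/negP => d.
    by move/stableP: sS' => /(_ y s yS sS); rewrite K_adj d.
  move=> /orP [/eqP-> | aS] /orP [/eqP-> | bS].
  - by rewrite K_adj eqxx.
  - by rewrite K_adj cs (sameS b bS) eqxx.
  - by rewrite K_adj cs (sameS a aS) eqxx.
  - by move/stableP: sS'; apply.
by rewrite -(mx _ st (subsetUr _ _)) !inE eqxx.
Qed.

End KmnCIS.

Section LineCIS.
Variable n : nat.
Hypothesis n0 : 0 < n.
Let r := @line_rel _ (Kmn_rel n n).

Lemma r_irr : irreflexive r.
Proof. by move=> E; rewrite /r /line_rel eqxx. Qed.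

Lemma r_mk i j i' j' : r (mkE i j) (mkE i' j') =
  ((i != i') || (j != j')) && ((i == i') || (j == j')).
Proof. exact: line_rel_mkE. Qed.

Lemma star_row_clique i : is_clique r [set mkE i j | j : 'I_n].
Proof.
apply/cliqueP => x y /imsetP [j _ ->] /imsetP [j' _ ->] nxy.
rewrite r_mk eqxx /= ?andbT ?orbT ?andbT; apply/negP => /eqP E; subst j'; by rewrite eqxx in nxy.
Qed.

Lemma star_col_clique j : is_clique r [set mkE i j | i : 'I_n].
Proof.
apply/cliqueP => x y /imsetP [i _ ->] /imsetP [i' _ ->] nxy.
rewrite r_mk eqxx /= ?orbF ?orbT ?andbT; apply/negP => /eqP E; subst i'; by rewrite eqxx in nxy.
Qed.

Lemma mc_star C : maximal_clique r C ->
  (exists i, forall j, mkE i j \in C) \/ (exists j, forall i, mkE i j \in C).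
Proof.
move=> mC; move/maxsetP: (mC) => [cC mx].
have [E0 E0C] : exists E, E \in C.
  case: (set_0Vmem C) => [C0 | [c cC']]; last by exists c.
  have cl : is_clique r [set mkE (Ordinal n0) (Ordinal n0)].
    by apply/cliqueP => a b; rewrite !inE => /eqP-> /eqP->; rewrite eqxx.
  move: (mx _ cl); rewrite C0 sub0set => /(_ isT) /setP /(_ (mkE (Ordinal n0) (Ordinal n0))).
  by rewrite !inE eqxx.
case: (mkE_surj E0) => i0 [j0 E0E]; subst E0.
case: (boolP [forall E in C, [exists j, E == mkE i0 j]]) => [/forallP H | ].
  have sub : C \subset [set mkE i0 j | j : 'I_n].
    apply/subsetP => E EC; move: (H E); rewrite EC /= => /existsP [j /eqP ->].
    exact: imset_f.
  have E := mx _ (star_row_clique i0) sub.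
  by left; exists i0 => j; rewrite -E imset_f.
rewrite negb_forall => /existsP [E1]; rewrite negb_imply negb_exists => /andP [E1C /forallP H1].
case: (mkE_surj E1) => i1 [j1 E1E]; subst E1.
have i10 : i1 != i0 by apply/negP => /eqP E; subst i1; move: (H1 j1); rewrite eqxx.
have E01 : mkE i0 j0 != mkE i1 j1 by apply/negP => /eqP /mkE_inj [E _]; move: i10; rewrite E eqxx.
have h := (cliqueP _ _ cC) _ _ E0C E1C E01; rewrite r_mk in h.
case/andP: h => _ /orP [/eqP ii | /eqP j01]; first by move: i10; rewrite ii eqxx.
subst j1.
have sub : C \subset [set mkE i j0 | i : 'I_n].
  apply/subsetP => E EC; case: (mkE_surj E) => i [j EE]; subst E.
  case: (eqVneq j j0) => [-> | jj0]; first by apply/imsetP; exists i.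
  exfalso.
  have d0 : mkE i j != mkE i0 j0 by apply/negP => /eqP /mkE_inj [_ E]; move: jj0; rewrite E eqxx.
  have d1 : mkE i j != mkE i1 j0 by apply/negP => /eqP /mkE_inj [_ E]; move: jj0; rewrite E eqxx.
  have := (cliqueP _ _ cC) _ _ EC E0C d0; rewrite r_mk (negbTE jj0) orbF => /andP [_ /eqP ii0].
  have := (cliqueP _ _ cC) _ _ EC E1C d1; rewrite r_mk (negbTE jj0) orbF => /andP [_ /eqP ii1].
  by move: i10; rewrite -ii1 -ii0 eqxx.
have E := mx _ (star_col_clique j0) sub.
by right; exists j0 => i; rewrite -E; apply/imsetP; exists i.
Qed.
Lemma ms_pairs S a b a' b' : maximal_stable r S -> mkE a b \in S -> mkE a' b' \in S ->
  (a == a') || (b == b') -> (a = a') /\ (b = b').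
Proof.
move=> mS h1 h2 h.
have := (stableP _ _ (ms_stable mS)) _ _ h1 h2; rewrite r_mk h andbT negb_or !negbK.
by case/andP => /eqP -> /eqP ->.
Qed.

Lemma row_met S i : maximal_stable r S -> exists j, mkE i j \in S.
Proof.
move=> mS; case: (boolP [exists j, mkE i j \in S]) => [/existsP [j ?] | ]; first by exists j.
rewrite negb_exists => /forallP H; exfalso.
pose P := [set ij : 'I_n * 'I_n | mkE ij.1 ij.2 \in S].
have i1 : {in P &, injective (fun ij : 'I_n * 'I_n => ij.1)}.
  move=> [a b] [a' b']; rewrite !inE /= => h1 h2 E.
  by case: (ms_pairs mS h1 h2 (introT orP (or_introl (introT eqP E)))) => -> ->.
have i2 : {in P &, injective (fun ij : 'I_n * 'I_n => ij.2)}.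
  move=> [a b] [a' b']; rewrite !inE /= => h1 h2 E.
  by case: (ms_pairs mS h1 h2 (introT orP (or_intror (introT eqP E)))) => -> ->.
have sub : [set ij.1 | ij in P] \subset ~: [set i].
  apply/subsetP => a /imsetP [[a' b] ]; rewrite !inE /= => h -> /=.
  by apply: contraTneq h => ->; move: (H b); rewrite /=.
have c1 := subset_leq_card sub.
rewrite cardsC1 card_ord (card_in_imset i1) -(card_in_imset i2) in c1.
set K := [set ij.2 | ij in P] in c1 *.
have : 0 < #|~: K|.
  have c2 := cardsC K; rewrite card_ord in c2.
  lia.
case/card_gt0P => j; rewrite inE => jK.
have st : is_stable r (mkE i j |: S).
  apply/stableP => x y.
  have key : forall F, F \in S -> ~~ r (mkE i j) F && ~~ r F (mkE i j).
    move=> F FS; case: (mkE_surj F) => a [b FE]; subst F.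
    have Pab : (a, b) \in P by rewrite inE.
    have ai : a != i by apply: contraNneq (H b) => <-.
    have bj : b != j.
      by apply: contraNneq jK => <-; apply/imsetP; exists (a, b).
    by rewrite !r_mk (negbTE ai) (negbTE bj) eq_sym (negbTE ai) eq_sym (negbTE bj) !andbF.
  rewrite !inE => /orP [/eqP-> | xS] /orP [/eqP-> | yS].
  - by rewrite r_irr.
  - by case/andP: (key y yS).
  - by case/andP: (key x xS).
  - exact: (stableP _ _ (ms_stable mS)).
move/maxsetP: mS => [_ mx].
move: (mx _ st (subsetUr _ _)) => E.
by move: (H j); rewrite -E !inE eqxx.
Qed.

Lemma col_met S j : maximal_stable r S -> exists i, mkE i j \in S.
Proof.
move=> mS; case: (boolP [exists i, mkE i j \in S]) => [/existsP [i ?] | ]; first by exists i.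
rewrite negb_exists => /forallP H; exfalso.
pose P := [set ij : 'I_n * 'I_n | mkE ij.1 ij.2 \in S].
have i1 : {in P &, injective (fun ij : 'I_n * 'I_n => ij.1)}.
  move=> [a b] [a' b']; rewrite !inE /= => h1 h2 E.
  by case: (ms_pairs mS h1 h2 (introT orP (or_introl (introT eqP E)))) => -> ->.
have i2 : {in P &, injective (fun ij : 'I_n * 'I_n => ij.2)}.
  move=> [a b] [a' b']; rewrite !inE /= => h1 h2 E.
  by case: (ms_pairs mS h1 h2 (introT orP (or_intror (introT eqP E)))) => -> ->.
have sub : [set ij.2 | ij in P] \subset ~: [set j].
  apply/subsetP => b /imsetP [[a b'] ]; rewrite !inE /= => h -> /=.
  by apply: contraTneq h => ->; move: (H a); rewrite /=.
have c1 := subset_leq_card sub.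
rewrite cardsC1 card_ord (card_in_imset i2) -(card_in_imset i1) in c1.
set K := [set ij.1 | ij in P] in c1 *.
have : 0 < #|~: K|.
  have c2 := cardsC K; rewrite card_ord in c2.
  lia.
case/card_gt0P => i; rewrite inE => iK.
have st : is_stable r (mkE i j |: S).
  apply/stableP => x y.
  have key : forall F, F \in S -> ~~ r (mkE i j) F && ~~ r F (mkE i j).
    move=> F FS; case: (mkE_surj F) => a [b FE]; subst F.
    have Pab : (a, b) \in P by rewrite inE.
    have bj : b != j by apply: contraNneq (H a) => <-.
    have ai : a != i.
      by apply: contraNneq iK => <-; apply/imsetP; exists (a, b).
    by rewrite !r_mk (negbTE ai) (negbTE bj) eq_sym (negbTE ai) eq_sym (negbTE bj) !andbF.
  rewrite !inE => /orP [/eqP-> | xS] /orP [/eqP-> | yS].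
  - by rewrite r_irr.
  - by case/andP: (key y yS).
  - by case/andP: (key x xS).
  - exact: (stableP _ _ (ms_stable mS)).
move/maxsetP: mS => [_ mx].
move: (mx _ st (subsetUr _ _)) => E.
by move: (H i); rewrite -E !inE eqxx.
Qed.

Lemma line_CIS : CIS r.
Proof.
move=> C S mC mS.
case: (mc_star mC) => [[i Hi] | [j Hj]].
  by case: (row_met i mS) => j jS; apply/set0Pn; exists (mkE i j); rewrite inE Hi jS.
by case: (col_met j mS) => i iS; apply/set0Pn; exists (mkE i j); rewrite inE Hj iS.
Qed.

End LineCIS.

Theorem theorem1 (T : finType) (e : rel T) :
  simple_graph e -> connected_graph e -> diamond_free e ->
  (CIS e <->
     [\/ clique_simplicial e,
         exists m n : nat, [/\ 2 <= m, 2 <= n & isomorphic e (Kmn_rel m n)]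
       | exists n : nat, 3 <= n /\ isomorphic e (@line_rel _ (Kmn_rel n n))]).
Proof.
move=> [esym eirr] conn dfree; split.
- move=> cis.
  case: (boolP [forall C, maximal_clique e C ==> simplicial_clique e C]) => [/forallP H | H].
    by apply: Or31 => C mC; move: (H C); rewrite mC.
  have ncs : ~ clique_simplicial e.
    move=> cs; move/negP: H; apply; apply/forallP => C; apply/implyP; exact: cs.
  by case: (hard_NS esym eirr dfree cis conn ncs) => [K | G]; [apply: Or32 | apply: Or33].
- case => [cs | [m [n [m2 n2 iso]]] | [n [n3 iso]]].
  + exact: cs_CIS.
  + apply: (iso_CIS iso); apply: Kmn_CIS; lia.
  + apply: (iso_CIS iso); apply: line_CIS; lia.
Qed.
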